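(* Let $I$ be an ideal of $\mathbb{C}[K^{\pm1},C_1]$ and let $w=\sum_{(j,k,l)\in\mathbb{Z}_+\times\mathbb{Z}_+\times\mathbb{Z}}F_2^jF_3^kK_2^lQ_{j,k,l}v_\eta$, where $Q_{j,k,l}\in\mathbb{C}[K^{\pm1},C_1]$ and only finitely many are nonzero. Then $w\in W(\eta,I)$ if and only if $Q_{j,k,l}\in I$ for all $(j,k,l)$.
   Context: Fix $q\in\mathbb{C}\setminus\{0\}$ not a root of unity. $U=U_q(\mathfrak{sl}_3)$ is the associative $\mathbb{C}$-algebra generated by $E_1,E_2,F_1,F_2,K_1^{\pm1},K_2^{\pm1}$ subject to $K_iK_i^{-1}=K_i^{-1}K_i=1$, $K_1K_2=K_2K_1$, $[E_i,F_j]=\delta_{ij}\frac{K_i-K_i^{-1}}{q-q^{-1}}$, $K_iE_jK_i^{-1}=q^{a_{ij}}E_j$, $K_iF_jK_i^{-1}=q^{-a_{ij}}F_j$ for $i,j\in\{1,2\}$ with $a_{11}=a_{22}=2$, $a_{12}=a_{21}=-1$, and the quantum Serre relations $E_i^2E_j-(q+q^{-1})E_iE_jE_i+E_jE_i^2=0$, $F_i^2F_j-(q+q^{-1})F_iF_jF_i+F_jF_i^2=0$ for $i\neq j$. Let $U^+$ be the subalgebra generated by $E_1,E_2$, and $F_3=F_1F_2-qF_2F_1$. Fix $\alpha\in\mathbb{C}\setminus\{0\}$ and let $\eta:U^+\to\mathbb{C}$ be the algebra homomorphism with $\eta(E_1)=\alpha$, $\eta(E_2)=0$. $M(\eta)=U\otimes_{U^+}\mathbb{C}v_\eta$,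 where $xv_\eta=\eta(x)v_\eta$ for $x\in U^+$. Put $K=K_1K_2^2$, $C_1=F_1E_1+\frac{qK_1+q^{-1}K_1^{-1}}{(q-q^{-1})^2}$; $\mathbb{C}[K^{\pm1},C_1]$ is the commutative subalgebra they generate. For an ideal $I$ of $\mathbb{C}[K^{\pm1},C_1]$, $W(\eta,I)=U\,Iv_\eta\subseteq M(\eta)$. *)

(* Defs.v *)
From HB Require Import structures.
From mathcomp Require Import all_boot all_order all_algebra.
From mathcomp Require Import complex.
From mathcomp Require Import reals.
Set Implicit Arguments. Unset Strict Implicit. Unset Printing Implicit Defensive.
Import Order.TTheory GRing.Theory Num.Theory.
Local Open Scope ring_scope.

Section Uq.
Variable R : realType.
Local Notation C := (R[i]).

Inductive gen := gE1 | gE2 | gF1 | gF2 | gK1 | gK1i | gK2 | gK2i.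

Inductive term :=
| tG of gen
| tC of C
| tAdd of term & term
| tMul of term & term.

Definition tOne := tC 1.
Definition tZero := tC 0.
Definition tSub (x y : term) := tAdd x (tMul (tC (-1)) y).

Fixpoint tpow (t : term) (n : nat) : term :=
  if n is n'.+1 then tMul t (tpow t n') else tOne.

Definition tsum (X : Type) (s : seq X) (f : X -> term) : term :=
  foldr (fun x acc => tAdd (f x) acc) tZero s.

Definition E1 := tG gE1.  Definition E2 := tG gE2.
Definition F1 := tG gF1.  Definition F2 := tG gF2.
Definition K1 := tG gK1.  Definition K1i := tG gK1i.
Definition K2 := tG gK2.  Definition K2i := tG gK2i.

Variable q : C.

Definition tComm a b := tSub (tMul a b) (tMul b a).

Definition serre a b :=
  tAdd (tSub (tMul (tMul a a) b) (tMul (tC (q + q^-1)) (tMul (tMul a b) a)))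
       (tMul b (tMul a a)).

Definition qq := (q - q^-1)^-1.

(* Defining relations of U = U_q(sl_3), as pairs lhs = rhs.
   Cartan matrix: a_ii = 2, a_ij = -1 (i <> j). *)
Inductive urel : term -> term -> Prop :=
| r_K1a : urel (tMul K1 K1i) tOne
| r_K1b : urel (tMul K1i K1) tOne
| r_K2a : urel (tMul K2 K2i) tOne
| r_K2b : urel (tMul K2i K2) tOne
| r_KK  : urel (tMul K1 K2) (tMul K2 K1)
| r_EF11 : urel (tComm E1 F1) (tMul (tC qq) (tSub K1 K1i))
| r_EF22 : urel (tComm E2 F2) (tMul (tC qq) (tSub K2 K2i))
| r_EF12 : urel (tComm E1 F2) tZero
| r_EF21 : urel (tComm E2 F1) tZero
| r_K1E1 : urel (tMul (tMul K1 E1) K1i) (tMul (tC (q ^+ 2)) E1)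
| r_K1E2 : urel (tMul (tMul K1 E2) K1i) (tMul (tC (q ^-1)) E2)
| r_K2E1 : urel (tMul (tMul K2 E1) K2i) (tMul (tC (q ^-1)) E1)
| r_K2E2 : urel (tMul (tMul K2 E2) K2i) (tMul (tC (q ^+ 2)) E2)
| r_K1F1 : urel (tMul (tMul K1 F1) K1i) (tMul (tC (q ^- 2)) F1)
| r_K1F2 : urel (tMul (tMul K1 F2) K1i) (tMul (tC q) F2)
| r_K2F1 : urel (tMul (tMul K2 F1) K2i) (tMul (tC q) F1)
| r_K2F2 : urel (tMul (tMul K2 F2) K2i) (tMul (tC (q ^- 2)) F2)
| r_SE12 : urel (serre E1 E2) tZero
| r_SE21 : urel (serre E2 E1) tZero
| r_SF12 : urel (serre F1 F2) tZero
| r_SF21 : urel (serre F2 F1) tZero.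

(* Equality in U: the congruence generated by the axioms of an associative
   unital C-algebra together with the defining relations.  So U = term / ueq. *)
Inductive ueq : term -> term -> Prop :=
| ue_refl x : ueq x x
| ue_sym x y : ueq x y -> ueq y x
| ue_trans x y z : ueq x y -> ueq y z -> ueq x z
| ue_add x x' y y' : ueq x x' -> ueq y y' -> ueq (tAdd x y) (tAdd x' y')
| ue_mul x x' y y' : ueq x x' -> ueq y y' -> ueq (tMul x y) (tMul x' y')
| ue_addA x y z : ueq (tAdd x (tAdd y z)) (tAdd (tAdd x y) z)
| ue_addC x y : ueq (tAdd x y) (tAdd y x)
| ue_add0 x : ueq (tAdd x tZero) x
| ue_addN x : ueq (tAdd x (tMul (tC (-1)) x)) tZero
| ue_mulA x y z : ueq (tMul x (tMul y z)) (tMul (tMul x y) z)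
| ue_mul1l x : ueq (tMul tOne x) x
| ue_mul1r x : ueq (tMul x tOne) x
| ue_mulDl x y z : ueq (tMul (tAdd x y) z) (tAdd (tMul x z) (tMul y z))
| ue_mulDr x y z : ueq (tMul x (tAdd y z)) (tAdd (tMul x y) (tMul x z))
| ue_cadd a b : ueq (tAdd (tC a) (tC b)) (tC (a + b))
| ue_cmul a b : ueq (tMul (tC a) (tC b)) (tC (a * b))
| ue_ccomm a x : ueq (tMul (tC a) x) (tMul x (tC a))
| ue_rel x y : urel x y -> ueq x y.

Definition K2pow (l : int) : term :=
  match l with Posz n => tpow K2 n | Negz n => tpow K2i n.+1 end.

Definition F3 := tSub (tMul F1 F2) (tMul (tC q) (tMul F2 F1)).

Definition Kt := tMul K1 (tMul K2 K2).
Definition Kti := tMul (tMul K2i K2i) K1i.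
Definition C1t :=
  tAdd (tMul F1 E1)
       (tMul (tC (qq ^+ 2)) (tAdd (tMul (tC q) K1) (tMul (tC q^-1) K1i))).

Inductive ck_syn : term -> Prop :=
| cks_C a : ck_syn (tC a)
| cks_K : ck_syn Kt
| cks_Ki : ck_syn Kti
| cks_C1 : ck_syn C1t
| cks_add x y : ck_syn x -> ck_syn y -> ck_syn (tAdd x y)
| cks_mul x y : ck_syn x -> ck_syn y -> ck_syn (tMul x y).

Definition inCK (x : term) : Prop := exists y, ck_syn y /\ ueq x y.

Definition is_CK_ideal (I : term -> Prop) : Prop :=
  [/\ (forall x y, ueq x y -> I x -> I y),
      (forall x, I x -> inCK x),
      I tZero,
      (forall x y, I x -> I y -> I (tAdd x y)) &
      (forall r x, inCK r -> I x -> I (tMul r x) /\ I (tMul x r))].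

Inductive left_ideal (G : term -> Prop) : term -> Prop :=
| li_gen g : G g -> left_ideal G g
| li_zero : left_ideal G tZero
| li_add x y : left_ideal G x -> left_ideal G y -> left_ideal G (tAdd x y)
| li_lmul u x : left_ideal G x -> left_ideal G (tMul u x)
| li_ueq x y : ueq x y -> left_ideal G x -> left_ideal G y.

Variable alpha : C.

Inductive pterm :=
| pE1 | pE2 | pC of C | pAdd of pterm & pterm | pMul of pterm & pterm.

Fixpoint pemb (p : pterm) : term :=
  match p with
  | pE1 => E1 | pE2 => E2 | pC a => tC a
  | pAdd x y => tAdd (pemb x) (pemb y)
  | pMul x y => tMul (pemb x) (pemb y)
  end.

Fixpoint eta (p : pterm) : C :=
  match p with
  | pE1 => alpha | pE2 => 0 | pC a => a
  | pAdd x y => eta x + eta y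
  | pMul x y => eta x * eta y
  end.

(* M(eta) = U (x)_{U^+} C v_eta = U / U.{x - eta(x) : x in U^+};
   the vector u v_eta is represented by the term u, and
   u v_eta = u' v_eta in M(eta) iff Mrel (u - u'). *)
Definition Mrel : term -> Prop :=
  left_ideal (fun t => exists p, t = tSub (pemb p) (tC (eta p))).

(* u v_eta lies in W(eta, I) = U I v_eta *)
Definition inW (I : term -> Prop) (u : term) : Prop :=
  exists y, left_ideal I y /\ Mrel (tSub u y).

End Uq.

(* Main.v *)
Require Import Defs.
From HB Require Import structures.
From mathcomp Require Import all_boot all_order all_algebra.
From mathcomp Require Import complex.
From mathcomp Require Import reals.
From mathcomp Require Import ring zify.
From mathcomp Require boolp.
From Stdlib Require Import ClassicalEpsilon ProofIrrelevance FunctionalExtensionality PropExtensionality.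
Import Order.TTheory GRing.Theory Num.Theory.
Local Open Scope ring_scope.

Module A.

Section Mod.
Variable R : realType.
Local Notation C := (R[i]).
Variables (q alpha : C).
Hypothesis hq0 : q != 0.
Hypothesis hq2 : q ^+ 2 != 1.
Hypothesis hal : alpha != 0.

Definition off (x c : int) : int := x + c.
Lemma offA x c1 c2 : off (off x c1) c2 = off x (intZmod.addz c1 c2).
Proof. by rewrite /off -addrA. Qed.
Lemma off0 x : off x (Posz 0) = x.
Proof. by rewrite /off addr0. Qed.

Definition qp (x : int) : C := q ^ x.
Lemma qp_off x c : qp (off x c) = qp x * qp c.
Proof. by rewrite /qp /off expfzDr. Qed.
Lemma qpP n : qp (Posz n) = q ^+ n. Proof. by []. Qed.
Lemma qpN n : qp (Negz n) = (q ^+ n.+1)^-1. Proof. by []. Qed.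
Lemma qp_neq0 x : qp x != 0. Proof. by rewrite /qp expfz_neq0. Qed.
Lemma qmq_neq0 : q - q^-1 != 0.
Proof.
apply/eqP=> h; move/eqP: hq2; apply; apply/eqP.
have : q * (q - q^-1) = 0 by rewrite h mulr0.
rewrite mulrBr divff // expr2; move/eqP; rewrite subr_eq0 => /eqP ->. by [].
Qed.

Definition br (x : int) : C := (qp x - (qp x)^-1) / (q - q^-1).

Definition V := int -> int -> int -> int -> int -> C.

Notation p1 := (Posz 1). Notation p2 := (Posz 2). Notation m1 := (Negz 0).
Notation m2 := (Negz 1). Notation m3 := (Negz 2).
Definition qQ := qq q.

Definition opK2 (f : V) : V := fun j k l a b => (qp j ^+ 2 * qp k)^-1 * f j k (off l m1) a b.
Definition opK2i (f : V) : V := fun j k l a b => qp j ^+ 2 * qp k * f j k (off l p1) a b.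
Definition opK1 (f : V) : V := fun j k l a b => qp j / qp k * f j k (off l p2) (off a m1) b.
Definition opK1i (f : V) : V := fun j k l a b => qp k / qp j * f j k (off l m2) (off a p1) b.
Definition opF2 (f : V) : V := fun j k l a b => f (off j m1) k l a b.
Definition opF1 (f : V) : V := fun j k l a b =>
  br (off j p1) * f (off j p1) (off k m1) l a b
  + qp j / (qp k * qp l * alpha) * f j k l a (off b m1)
  - qQ ^+ 2 * q * (qp j / (qp k * qp (off l p2) * alpha)) * f j k (off l p2) (off a m1) b
  - qQ ^+ 2 / q * (qp j / (qp k * qp (off l m2) * alpha)) * f j k (off l m2) (off a p1) b.
Definition opE1 (f : V) : V := fun j k l a b =>
  alpha * qp l * f j k l a b + br (off k p1) * f (off j m1) (off k p1) (off l m2) (off a p1) b.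
Definition opE2 (f : V) : V := fun j k l a b =>
  qQ * br (off j p1) / (qp j * qp k) * f (off j p1) k (off l m1) a b
  - qQ * br (off j p1) * qp j * qp k * f (off j p1) k (off l p1) a b
  - q * br (off k p1) / (qp k * qp l * alpha) * f j (off k p1) (off l m1) a (off b m1)
  + qQ ^+ 2 * br (off k p1) / (qp k * qp l * alpha) * f j (off k p1) (off l p1) (off a m1) b
  + qQ ^+ 2 * q ^+ 2 * br (off k p1) / (qp k * qp l * alpha) * f j (off k p1) (off l m3) (off a p1) b.

Definition opG (g : gen) : V -> V :=
  match g with
  | gE1 => opE1 | gE2 => opE2 | gF1 => opF1 | gF2 => opF2
  | gK1 => opK1 | gK1i => opK1i | gK2 => opK2 | gK2i => opK2i
  end.

Fixpoint act (t : term R) : V -> V :=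
  match t with
  | tG g => opG g
  | tC c => fun f j k l a b => c * f j k l a b
  | tAdd x y => fun f j k l a b => act x f j k l a b + act y f j k l a b
  | tMul x y => fun f => act x (act y f)
  end.

Lemma funext5 (f g : V) : (forall j k l a b, f j k l a b = g j k l a b) -> f = g.
Proof.
move=> h; do 5 (apply: functional_extensionality => ?); exact: h.
Qed.

Ltac norm_idx :=
  repeat rewrite ?offA;
  repeat match goal with |- context [intZmod.addz ?c1 ?c2] =>
    let c := eval vm_compute in (intZmod.addz c1 c2) in
    change (intZmod.addz c1 c2) with c end;
  rewrite ?off0.

Lemma qq1 : q * q - 1 != 0.
Proof. by rewrite -expr2 subr_eq0. Qed.

Ltac solve_rel :=
  move=> f; apply: funext5 => j k l a b /=;
  unfold opE1, opE2, opF1, opF2, opK1, opK1i, opK2, opK2i;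
  norm_idx; unfold br, qQ, qq; rewrite ?qp_off ?qpP ?qpN;
  field; rewrite ?qp_neq0 ?qmq_neq0 ?qq1 ?hq0 ?hal //.


Lemma act_urel x y : urel q x y -> forall f, act x f = act y f.
Proof.
case; rewrite /serre /tComm /tSub /tZero /tOne /E1 /E2 /F1 /F2 /K1 /K1i /K2 /K2i; solve_rel.
Qed.

Definition addV (f g : V) : V := fun j k l a b => f j k l a b + g j k l a b.
Definition scV (c : C) (f : V) : V := fun j k l a b => c * f j k l a b.


Lemma act_add x f g : act x (addV f g) = addV (act x f) (act x g).
Proof.
elim: x f g => [gg|d|x IHx y IHy|x IHx y IHy] f g /=.
- case: gg; apply: funext5 => j k l a b;
  unfold addV, opG, opE1, opE2, opF1, opF2, opK1, opK1i, opK2, opK2i; ring.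
- by apply: funext5 => j k l a b; rewrite /addV; ring.
- by rewrite IHx IHy; apply: funext5 => j k l a b; rewrite /addV; ring.
- by rewrite IHy IHx.
Qed.

Lemma act_sc x c f : act x (scV c f) = scV c (act x f).
Proof.
elim: x f => [gg|d|x IHx y IHy|x IHx y IHy] f /=.
- case: gg; apply: funext5 => j k l a b;
  unfold scV, opG, opE1, opE2, opF1, opF2, opK1, opK1i, opK2, opK2i; ring.
- by apply: funext5 => j k l a b; rewrite /scV; ring.
- by rewrite IHx IHy; apply: funext5 => j k l a b; rewrite /scV; ring.
- by rewrite IHy IHx.
Qed.

Lemma act_ueq x y : ueq q x y -> forall f, act x f = act y f.
Proof.
elim=> {x y}.
- by [].
- by move=> x y _ h f; rewrite h.
- by move=> x y z _ h1 _ h2 f; rewrite h1 h2.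
- by move=> x x' y y' _ h1 _ h2 f /=; rewrite h1 h2.
- by move=> x x' y y' _ h1 _ h2 f /=; rewrite h2 h1.
- by move=> x y z f /=; apply: funext5 => *; rewrite addrA.
- by move=> x y f /=; apply: funext5 => *; rewrite addrC.
- by move=> x f /=; apply: funext5 => *; rewrite mul0r addr0.
- by move=> x f /=; apply: funext5 => j k l a b; ring.
- by [].
- by move=> x f /=; apply: funext5 => *; rewrite mul1r.
- move=> x f /=; congr (act x); by apply: funext5 => *; rewrite mul1r.
- by [].
- by move=> x y z f /=; rewrite -/(addV _ _) act_add.
- by move=> a b f /=; apply: funext5 => *; rewrite mulrDl.
- by move=> a b f /=; apply: funext5 => *; rewrite mulrA.
- by move=> a x f /=; rewrite -/(scV a _) act_sc.
- by move=> x y h f; apply: act_urel.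
Qed.
End Mod.

End A.
Import A.

Module B.

Section B.
Variable R : realType.
Local Notation C := (R[i]).
Variables (q alpha : C).
Hypothesis hq0 : q != 0.
Hypothesis hq2 : q ^+ 2 != 1.
Hypothesis hal : alpha != 0.
Local Notation V := (V R).
Local Notation scV := (scV R).
Local Notation addV := (addV R).
Local Notation act := (act R q alpha).
Local Notation qp := (qp R q).
Local Notation br := (br R q).
Notation p1 := (Posz 1). Notation p2 := (Posz 2). Notation m1 := (Negz 0).
Notation m2 := (Negz 1). Notation m3 := (Negz 2). Notation z0 := (Posz 0).

Definition E3 (j0 k0 l0 : int) (g : int -> int -> C) : V :=
  fun j k l a b => if (j == j0) && (k == k0) && (l == l0) then g a b else 0.
Definition shA (g : int -> int -> C) : int -> int -> C := fun a b => g (off a m1) b.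
Definition shAi (g : int -> int -> C) : int -> int -> C := fun a b => g (off a p1) b.
Definition shB (g : int -> int -> C) : int -> int -> C := fun a b => g a (off b m1).

Lemma off_eq x c y : (off x c == y) = (x == off y (- c)).
Proof. by rewrite /off -{1}(opprK c) subr_eq. Qed.
Lemma eq_off_self x c : (x == off x c) = (c == 0).
Proof. by rewrite /off -subr_eq0 opprD addrA subrr add0r oppr_eq0. Qed.
Lemma off_eq_self x c : (off x c == x) = (c == 0).
Proof. by rewrite eq_sym eq_off_self. Qed.
Lemma off_eq_off x c1 c2 : (off x c1 == off x c2) = (c1 == c2).
Proof. by rewrite /off (inj_eq (addrI x)). Qed.

Ltac is_natlit n := match n with O => idtac | S ?m => is_natlit m end.
Ltac is_lit x := match x with Posz ?n => is_natlit n | Negz ?n => is_natlit n end.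

Ltac norm_closed :=
  repeat match goal with
  | |- context [intZmod.addz ?c1 ?c2] => is_lit c1; is_lit c2;
      let c := eval vm_compute in (intZmod.addz c1 c2) in change (intZmod.addz c1 c2) with c
  | |- context [off ?c1 ?c2] => is_lit c1; is_lit c2;
      let c := eval vm_compute in (off c1 c2) in change (off c1 c2) with c
  | |- context [- ?c1] => is_lit c1;
      let c := eval vm_compute in (- c1) in change (- c1) with c
  | |- context [?c1 == ?c2] => is_lit c1; is_lit c2;
      let c := eval vm_compute in (c1 == c2) in change (c1 == c2) with c
  end.

Ltac norm_all := repeat (rewrite ?offA ?off0; norm_closed); rewrite ?off0.

Ltac case_vars :=
  repeat (rewrite ?off_eq; norm_all; rewrite ?eq_off_self ?off_eq_self ?off_eq_off ?eqxx;
          norm_all; rewrite /= ?andbT ?andbF /=;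
  match goal with
  | |- context [?x == ?y] => is_var x;
      case: (eqVneq x y) => [?|?]; [subst x | rewrite ?(negbTE _ : (x == y) = false) //]
  end); rewrite ?off_eq; norm_all; rewrite ?eq_off_self ?off_eq_self ?off_eq_off ?eqxx;
          norm_all; rewrite /= ?andbT ?andbF /=.

Lemma qmq_neq0' : q - q^-1 != 0.
Proof.
apply/eqP=> h; move/eqP: hq2; apply; apply/eqP.
have : q * (q - q^-1) = 0 by rewrite h mulr0.
rewrite mulrBr divff // expr2; move/eqP; rewrite subr_eq0 => /eqP ->. by [].
Qed.
Lemma qq1' : q * q - 1 != 0.
Proof. by rewrite -expr2 subr_eq0. Qed.

Lemma qpo x c : qp (off x c) = qp x * qp c.
Proof. exact: qp_off. Qed.
Lemma qpn x : qp x != 0.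
Proof. exact: qp_neq0. Qed.
Lemma qpP' n : qp (Posz n) = q ^+ n. Proof. by []. Qed.
Lemma qpN' n : qp (Negz n) = (q ^+ n.+1)^-1. Proof. by []. Qed.

Ltac side := repeat (apply/andP; split); rewrite ?eqxx //;
  first [exact: qpn | exact: hq0 | exact: hal | exact: qmq_neq0' | exact: qq1' | idtac].

Ltac fin := unfold br, qQ, qq; rewrite ?qpo ?qpP' ?qpN';
  field; side.

Ltac pt := apply: funext5 => j k l a b; rewrite /=;
  unfold E3, shA, shAi, shB, opE1, opE2, opF1, opF2, opK1, opK1i, opK2, opK2i;
  norm_all; case_vars.


Ltac spt := pt; try done; fin.

Lemma actF2E j0 k0 l0 g : act (F2 R) (E3 j0 k0 l0 g) = E3 (off j0 p1) k0 l0 g.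
Proof. spt. Qed.
Lemma actF3E k0 l0 g : act (F3 q) (E3 z0 k0 l0 g) = E3 z0 (off k0 p1) l0 g.
Proof. rewrite /F3 /tSub /F1 /F2; spt. Qed.
Lemma actK2E l0 g : act (K2 R) (E3 z0 z0 l0 g) = E3 z0 z0 (off l0 p1) g.
Proof. spt. Qed.
Lemma actK2iE l0 g : act (K2i R) (E3 z0 z0 l0 g) = E3 z0 z0 (off l0 m1) g.
Proof. spt. Qed.
Lemma actE1E g : act (E1 R) (E3 z0 z0 z0 g) = scV alpha (E3 z0 z0 z0 g).
Proof. rewrite /scV; spt. Qed.
Lemma actE2E g : act (E2 R) (E3 z0 z0 z0 g) = (fun _ _ _ _ _ => 0).
Proof. spt. Qed.
Lemma actKtE g : act (Kt R) (E3 z0 z0 z0 g) = E3 z0 z0 z0 (shA g).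
Proof. rewrite /Kt /K1 /K2; spt. Qed.
Lemma actKtiE g : act (Kti R) (E3 z0 z0 z0 g) = E3 z0 z0 z0 (shAi g).
Proof. rewrite /Kti /K1i /K2i; spt. Qed.
Lemma actC1E g : act (C1t q) (E3 z0 z0 z0 g) = E3 z0 z0 z0 (shB g).
Proof. rewrite /C1t /F1 /E1 /K1 /K1i; spt. Qed.
Lemma actCE c g : act (tC c) (E3 z0 z0 z0 g) = E3 z0 z0 z0 (fun a b => c * g a b).
Proof. spt. Qed.
End B.

End B.
Import B.

Module Uq.

Section Uq.
Variable R : realType.
Variable q : R[i].
Local Notation T := (term R).

Definition Uq := {P : T -> Prop | exists t, P = ueq q t}.
Definition cls (t : T) : Uq := exist _ (ueq q t) (ex_intro _ t erefl).
Definition rep (x : Uq) : T := proj1_sig (constructive_indefinite_description _ (proj2_sig x)).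

Lemma rep_spec x : proj1_sig x = ueq q (rep x).
Proof. rewrite /rep; by case: constructive_indefinite_description. Qed.

Lemma sig_eq (x y : Uq) : proj1_sig x = proj1_sig y -> x = y.
Proof. case: x => P hP; case: y => P' hP' /= e; subst P'; f_equal; exact: proof_irrelevance. Qed.

Lemma cls_rep x : cls (rep x) = x.
Proof. by apply: sig_eq; rewrite /= rep_spec. Qed.

Lemma ueq_cls t t' : ueq q t t' -> cls t = cls t'.
Proof.
move=> h; apply: sig_eq => /=; apply: functional_extensionality => x.
apply: propositional_extensionality; split => h'.
- exact: ue_trans (ue_sym h) h'.
- exact: ue_trans h h'.
Qed.

Lemma cls_ueq t t' : cls t = cls t' -> ueq q t t'.
Proof. move=> /(congr1 (@proj1_sig _ _)) /= e; rewrite e; exact: ue_refl. Qed.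

Lemma rep_cls t : ueq q (rep (cls t)) t.
Proof. apply: cls_ueq; exact: cls_rep. Qed.

Lemma clsW (P : Uq -> Prop) : (forall t, P (cls t)) -> forall x, P x.
Proof. by move=> h x; rewrite -(cls_rep x). Qed.

HB.instance Definition _ := boolp.gen_eqMixin Uq.
HB.instance Definition _ := boolp.gen_choiceMixin Uq.

Definition zeroU := cls (tZero R).
Definition addU x y := cls (tAdd (rep x) (rep y)).
Definition oppU x := cls (tMul (tC (-1)) (rep x)).
Definition oneU := cls (tOne R).
Definition mulU x y := cls (tMul (rep x) (rep y)).

Lemma addU_cls t t' : addU (cls t) (cls t') = cls (tAdd t t').
Proof. apply: ueq_cls; apply: ue_add; exact: rep_cls. Qed.
Lemma mulU_cls t t' : mulU (cls t) (cls t') = cls (tMul t t').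
Proof. apply: ueq_cls; apply: ue_mul; exact: rep_cls. Qed.
Lemma oppU_cls t : oppU (cls t) = cls (tMul (tC (-1)) t).
Proof. apply: ueq_cls; apply: ue_mul; [exact: ue_refl | exact: rep_cls]. Qed.

Lemma addUA : associative addU.
Proof.
elim/clsW=> x; elim/clsW=> y; elim/clsW=> z.
rewrite !addU_cls; apply: ueq_cls; exact: ue_addA.
Qed.
Lemma addUC : commutative addU.
Proof. elim/clsW=> x; elim/clsW=> y; rewrite !addU_cls; apply: ueq_cls; exact: ue_addC. Qed.
Lemma add0U : left_id zeroU addU.
Proof.
elim/clsW=> x; rewrite /zeroU addU_cls; apply: ueq_cls.
exact: ue_trans (ue_addC _ _ _) (ue_add0 _ _).
Qed.
Lemma addNU : left_inverse zeroU oppU addU.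
Proof.
elim/clsW=> x; rewrite oppU_cls addU_cls; apply: ueq_cls.
exact: ue_trans (ue_addC _ _ _) (ue_addN _ _).
Qed.

HB.instance Definition _ := GRing.isZmodule.Build Uq addUA addUC add0U addNU.

Lemma mulUA : associative mulU.
Proof. elim/clsW=> x; elim/clsW=> y; elim/clsW=> z; rewrite !mulU_cls; apply: ueq_cls; exact: ue_mulA. Qed.
Lemma mul1U : left_id oneU mulU.
Proof. elim/clsW=> x; rewrite /oneU mulU_cls; apply: ueq_cls; exact: ue_mul1l. Qed.
Lemma mulU1 : right_id oneU mulU.
Proof. elim/clsW=> x; rewrite /oneU mulU_cls; apply: ueq_cls; exact: ue_mul1r. Qed.
Lemma mulUDl : left_distributive mulU addU.
Proof. elim/clsW=> x; elim/clsW=> y; elim/clsW=> z; rewrite (addU_cls x y) (mulU_cls (tAdd x y) z) (mulU_cls x z) (mulU_cls y z) addU_cls; apply: ueq_cls; exact: ue_mulDl. Qed.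
Lemma mulUDr : right_distributive mulU addU.
Proof. elim/clsW=> x; elim/clsW=> y; elim/clsW=> z; rewrite (addU_cls y z) (mulU_cls x (tAdd y z)) (mulU_cls x y) (mulU_cls x z) addU_cls; apply: ueq_cls; exact: ue_mulDr. Qed.

HB.instance Definition _ := GRing.Zmodule_isPzRing.Build Uq mulUA mul1U mulU1 mulUDl mulUDr.

Lemma clsD t t' : cls (tAdd t t') = cls t + cls t'.
Proof. by rewrite -addU_cls. Qed.
Lemma clsM t t' : cls (tMul t t') = cls t * cls t'.
Proof. by rewrite -mulU_cls. Qed.
Lemma cls0 : cls (tZero R) = 0. Proof. by []. Qed.
Lemma cls1 : cls (tOne R) = 1. Proof. by []. Qed.

Definition sc (c : R[i]) : Uq := cls (tC c).
Lemma scD a b : sc (a + b) = sc a + sc b.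
Proof. rewrite /sc -clsD; apply: ueq_cls; apply: ue_sym; exact: ue_cadd. Qed.
Lemma scM a b : sc (a * b) = sc a * sc b.
Proof. rewrite /sc -clsM; apply: ueq_cls; apply: ue_sym; exact: ue_cmul. Qed.
Lemma sc1 : sc 1 = 1. Proof. by []. Qed.
Lemma sc0 : sc 0 = 0. Proof. by []. Qed.
Lemma sc_comm a x : sc a * x = x * sc a.
Proof. elim/clsW: x => x; rewrite /sc -!clsM; apply: ueq_cls; exact: ue_ccomm. Qed.
End Uq.

End Uq.
Import Uq.

Module D.

Section D.
Variable R : realType.
Local Notation C := (R[i]).
Variables (q : C).
Hypothesis hq0 : q != 0.
Local Notation U := (Uq R q).
Local Notation cls := (cls R q).
Local Notation sc := (sc R q).

Lemma rel_eq x y : urel q x y -> cls x = cls y.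
Proof. by move=> h; apply: ueq_cls; apply: ue_rel. Qed.
Arguments rel_eq [x y].

Definition k1 := cls (K1 R). Definition k1i := cls (K1i R).
Definition k2 := cls (K2 R). Definition k2i := cls (K2i R).
Definition f1 := cls (F1 R). Definition e1 := cls (E1 R).
Definition kt := cls (Kt R). Definition kti := cls (Kti R). Definition c1 := cls (C1t q).

Lemma k1k1i : k1 * k1i = 1. Proof. by rewrite -clsM (rel_eq (r_K1a _)). Qed.
Lemma k1ik1 : k1i * k1 = 1. Proof. by rewrite -clsM (rel_eq (r_K1b _)). Qed.
Lemma k2k2i : k2 * k2i = 1. Proof. by rewrite -clsM (rel_eq (r_K2a _)). Qed.
Lemma k2ik2 : k2i * k2 = 1. Proof. by rewrite -clsM (rel_eq (r_K2b _)). Qed.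
Lemma k1k2 : k1 * k2 = k2 * k1. Proof. by rewrite -!clsM (rel_eq (r_KK _)). Qed.

Lemma conj_rel (x y xi : U) s : xi * x = 1 -> x * y * xi = s * y -> x * y = s * y * x.
Proof. by move=> hi h; rewrite -[x * y]mulr1 -hi mulrA h. Qed.
Arguments conj_rel {x y xi s}.

Lemma k1f1 : k1 * f1 = sc (q ^- 2) * f1 * k1.
Proof. apply: (conj_rel k1ik1); by unfold k1, k1i, k2, k2i, f1, e1, sc; rewrite -!clsM (rel_eq (r_K1F1 _)). Qed.
Lemma k2f1 : k2 * f1 = sc q * f1 * k2.
Proof. apply: (conj_rel k2ik2); by unfold k1, k1i, k2, k2i, f1, e1, sc; rewrite -!clsM (rel_eq (r_K2F1 _)). Qed.
Lemma k1e1 : k1 * e1 = sc (q ^+ 2) * e1 * k1.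
Proof. apply: (conj_rel k1ik1); by unfold k1, k1i, k2, k2i, f1, e1, sc; rewrite -!clsM (rel_eq (r_K1E1 _)). Qed.
Lemma k2e1 : k2 * e1 = sc (q ^-1) * e1 * k2.
Proof. apply: (conj_rel k2ik2); by unfold k1, k1i, k2, k2i, f1, e1, sc; rewrite -!clsM (rel_eq (r_K2E1 _)). Qed.

Lemma ktE : kt = k1 * (k2 * k2). Proof. by rewrite /kt /Kt !clsM. Qed.
Lemma ktiE : kti = k2i * k2i * k1i. Proof. by rewrite /kti /Kti !clsM. Qed.

Lemma ktkti : kt * kti = 1.
Proof.
rewrite ktE ktiE !mulrA -(mulrA _ k2 k2i) k2k2i mulr1 -(mulrA _ k2 k2i) k2k2i mulr1.
exact: k1k1i.
Qed.
Lemma ktikt : kti * kt = 1.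
Proof.
rewrite ktE ktiE !mulrA -(mulrA _ k1i k1) k1ik1 mulr1 -(mulrA _ k2i k2) k2ik2 mulr1.
exact: k2ik2.
Qed.

Lemma sc_commP a x : GRing.comm x (sc a).
Proof. by rewrite /GRing.comm sc_comm. Qed.

Lemma swap (x y : U) s : x * y = sc s * y * x -> forall z, x * (y * z) = sc s * (y * (x * z)).
Proof. by move=> h z; rewrite mulrA h -!mulrA. Qed.
Arguments swap {x y s}.
Lemma scpull (x : U) a z : x * (sc a * z) = sc a * (x * z).
Proof. by rewrite mulrA -sc_comm mulrA. Qed.
Lemma scA a b z : sc a * (sc b * z) = sc (a * b) * z.
Proof. by rewrite mulrA scM. Qed.

Lemma kt_f1 : GRing.comm kt f1.
Proof.
rewrite /GRing.comm ktE -[f1 * _]mulr1 -[_ * f1]mulr1 -!mulrA.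
repeat first [rewrite scA | rewrite (swap k2f1) | rewrite (swap k1f1) | rewrite scpull].
have -> : q * q / q ^+ 2 = 1 by field.
by rewrite sc1 mul1r.
Qed.
Lemma kt_e1 : GRing.comm kt e1.
Proof.
rewrite /GRing.comm ktE -[e1 * _]mulr1 -[_ * e1]mulr1 -!mulrA.
repeat first [rewrite scA | rewrite (swap k2e1) | rewrite (swap k1e1) | rewrite scpull].
have -> : q^-1 / q * q ^+ 2 = 1 by field.
by rewrite sc1 mul1r.
Qed.
Lemma kt_k1 : GRing.comm kt k1.
Proof. apply: commr_sym; rewrite ktE; apply: commrM; [exact: commr_refl | apply: commrM; exact: k1k2]. Qed.
Lemma k2_k1i : k2 * k1i = k1i * k2.
Proof. by rewrite -[k2 * k1i]mul1r -k1ik1 -mulrA (mulrA k1) k1k2 -mulrA k1k1i mulr1. Qed.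
Lemma kt_k1i : GRing.comm kt k1i.
Proof.
apply: commr_sym; rewrite ktE; apply: commrM.
- by rewrite /GRing.comm k1ik1 k1k1i.
- apply: commrM; by rewrite /GRing.comm k2_k1i.
Qed.

Lemma c1E : c1 = f1 * e1 + sc (qq q ^+ 2) * (sc q * k1 + sc q^-1 * k1i).
Proof. unfold c1, C1t, f1, e1, k1, k1i, sc. by rewrite !(clsD, clsM). Qed.

Lemma kt_c1 : GRing.comm kt c1.
Proof.
rewrite c1E; apply: commrD; first exact: commrM kt_f1 kt_e1.
apply: commrM; first exact: sc_commP.
apply: commrD; apply: commrM; [exact: sc_commP | exact: kt_k1 | exact: sc_commP | exact: kt_k1i].
Qed.
Lemma kti_c1 : GRing.comm kti c1.
Proof.
rewrite /GRing.comm -[kti * c1]mulr1 -ktkti mulrA -(mulrA kti) -kt_c1.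
by rewrite !mulrA ktikt mul1r.
Qed.
Lemma kt_kti : GRing.comm kt kti.
Proof. by rewrite /GRing.comm ktkti ktikt. Qed.
End D.

End D.
Import D.

Module E.

Section E.
Variable R : realType.
Local Notation C := (R[i]).
Variables (q alpha : C).
Hypothesis hq0 : q != 0.
Hypothesis hq2 : q ^+ 2 != 1.
Hypothesis hal : alpha != 0.
Local Notation act := (act R q alpha).
Local Notation E3 := (E3 R).
Local Notation U := (Uq R q).
Local Notation cls := (cls R q).
Local Notation sc := (sc R q).
Local Notation kt := (kt R q).
Local Notation kti := (kti R q).
Local Notation c1 := (c1 R q).
Notation z0 := (Posz 0).

Definition X := (nat * nat * nat * C)%type.
Definition mon (x : X) : U := sc x.2 * (kt ^+ x.1.1.1 * kti ^+ x.1.1.2 * c1 ^+ x.1.2).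
Definition dsh (x : X) : int := (x.1.1.1%:Z - x.1.1.2%:Z).
Definition nfg (L : seq X) (g : int -> int -> C) : int -> int -> C :=
  fun a b => \sum_(x <- L) x.2 * g (a - dsh x) (b - (x.1.2)%:Z).
Definition comb (p : X * X) : X :=
  ((p.1.1.1.1 + p.2.1.1.1)%N, (p.1.1.1.2 + p.2.1.1.2)%N, (p.1.1.2 + p.2.1.2)%N, p.1.2 * p.2.2).

Lemma funext2 (f g : int -> int -> C) : (forall a b, f a b = g a b) -> f = g.
Proof. move=> h; do 2 (apply: functional_extensionality => ?); exact: h. Qed.

Lemma commXX (x y : U) m n : GRing.comm x y -> GRing.comm (x ^+ m) (y ^+ n).
Proof. move=> h; apply: commr_sym; apply: commrX; apply: commr_sym; exact: commrX. Qed.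

Lemma ktc1 : GRing.comm kt c1. Proof. exact: kt_c1. Qed.
Lemma ktic1 : GRing.comm kti c1. Proof. exact: kti_c1. Qed.
Lemma ktkti' : GRing.comm kt kti. Proof. exact: kt_kti. Qed.

Lemma PP a b c a' b' c' : kt ^+ a * kti ^+ b * c1 ^+ c * (kt ^+ a' * kti ^+ b' * c1 ^+ c')
  = kt ^+ (a + a') * kti ^+ (b + b') * c1 ^+ (c + c').
Proof.
have h1 : c1 ^+ c * (kt ^+ a' * kti ^+ b') = kt ^+ a' * kti ^+ b' * c1 ^+ c.
  apply: commrM; apply: commXX; apply: commr_sym; [exact: ktc1 | exact: ktic1].
have h2 : kti ^+ b * kt ^+ a' = kt ^+ a' * kti ^+ b.
  apply: commXX; apply: commr_sym; exact: ktkti'.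
transitivity (kt ^+ a * kti ^+ b * (c1 ^+ c * (kt ^+ a' * kti ^+ b')) * c1 ^+ c'); first by rewrite !mulrA.
rewrite h1.
transitivity (kt ^+ a * (kti ^+ b * kt ^+ a') * kti ^+ b' * (c1 ^+ c * c1 ^+ c')); first by rewrite !mulrA.
by rewrite h2 !exprD !mulrA.
Qed.

Lemma mon_mul x y : mon x * mon y = mon (comb (x, y)).
Proof.
case: x => [[[a b] c] u]; case: y => [[[a' b'] c'] u']; rewrite /mon /comb /=.
rewrite scM -PP.
transitivity (sc u * ((kt ^+ a * kti ^+ b * c1 ^+ c) * sc u') * (kt ^+ a' * kti ^+ b' * c1 ^+ c')); first by rewrite !mulrA.
by rewrite -sc_comm !mulrA.
Qed.

Lemma nfg_cat L1 L2 g a b : nfg (L1 ++ L2) g a b = nfg L1 g a b + nfg L2 g a b.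
Proof. by rewrite /nfg big_cat. Qed.

Lemma ck_nf s : ck_syn q s -> exists L : seq X,
  cls s = \sum_(x <- L) mon x /\
  forall g, act s (E3 z0 z0 z0 g) = E3 z0 z0 z0 (nfg L g).
Proof.
elim=> {s}.
- move=> c; exists [:: (0%N, 0%N, 0%N, c)]; split.
  + by rewrite big_seq1 /mon /= !expr0 !mulr1.
  + move=> g; rewrite (actCE R q alpha); congr (E3 _ _ _ _); apply: funext2 => a b.
    by rewrite /nfg big_seq1 /dsh /= !subr0.
- exists [:: (1%N, 0%N, 0%N, 1)]; split.
  + by rewrite big_seq1 /mon /= sc1 mul1r expr1 !expr0 !mulr1.
  + move=> g; rewrite (actKtE R q alpha hq0); congr (E3 _ _ _ _); apply: funext2 => a b.
    rewrite /nfg big_seq1 /dsh /shA /= mul1r; congr (g _ _); rewrite /off; lia.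
- exists [:: (0%N, 1%N, 0%N, 1)]; split.
  + by rewrite big_seq1 /mon /= sc1 mul1r expr1 !expr0 mul1r mulr1.
  + move=> g; rewrite (actKtiE R q alpha hq0); congr (E3 _ _ _ _); apply: funext2 => a b.
    rewrite /nfg big_seq1 /dsh /shAi /= mul1r; congr (g _ _); rewrite /off; lia.
- exists [:: (0%N, 0%N, 1%N, 1)]; split.
  + by rewrite big_seq1 /mon /= sc1 mul1r expr1 !expr0 !mul1r.
  + move=> g; rewrite (actC1E R q alpha hq0 hq2 hal); congr (E3 _ _ _ _); apply: funext2 => a b.
    rewrite /nfg big_seq1 /dsh /shB /= mul1r; congr (g _ _); rewrite /off; lia.
- move=> x y _ [L1 [h1 h1']] _ [L2 [h2 h2']]; exists (L1 ++ L2); split.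
  + by rewrite clsD h1 h2 big_cat.
  + move=> g /=; rewrite h1' h2'; apply: funext5 => j k l a b; rewrite /E3 nfg_cat.
    by case: ifP => _ //; rewrite addr0.
- move=> x y _ [L1 [h1 h1']] _ [L2 [h2 h2']].
  exists [seq comb p | p <- [seq (x1, x2) | x1 <- L1, x2 <- L2]]; split.
  + rewrite clsM h1 h2 big_map big_allpairs mulr_suml; apply: eq_bigr => x1 _.
    rewrite mulr_sumr; apply: eq_bigr => x2 _; exact: mon_mul.
  + move=> g /=; rewrite h2' h1'; congr (E3 _ _ _ _); apply: funext2 => a b.
    rewrite /nfg big_map big_allpairs; apply: eq_bigr => x1 _.
    rewrite mulr_sumr; apply: eq_bigr => x2 _.
    case: x1 => [[[a1 b1] c1'] u1]; case: x2 => [[[a2 b2] c2'] u2].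
    rewrite /comb /dsh /= mulrA; congr (_ * g _ _); lia.
Qed.

Definition d0 : int -> int -> C := fun a b => if (a == 0) && (b == 0) then 1 else 0.
Definition keyx (x : X) : int * int := (dsh x, (x.1.2)%:Z).
Definition Wx (x : X) : U := kt ^+ x.1.1.1 * kti ^+ x.1.1.2 * c1 ^+ x.1.2.

Lemma ktn n : kt ^+ n * kti ^+ n = 1.
Proof. by rewrite -(exprMn_comm n ktkti') (ktkti R q) expr1n. Qed.

Lemma W_key x y : keyx x = keyx y -> Wx x = Wx y.
Proof.
case: x => [[[a b] c] u]; case: y => [[[a' b'] c'] u']; rewrite /keyx /Wx /dsh /= => -[e1 e2].
have ec : c = c' by lia.
subst c'.
have e : (a + b' = a' + b)%N by lia.
congr (_ * _).
have hc : forall m n, kti ^+ m * kt ^+ n = kt ^+ n * kti ^+ m.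
  move=> m n; apply: commXX; apply: commr_sym; exact: ktkti'.
transitivity (kt ^+ a * (kti ^+ b * kt ^+ b') * kti ^+ b'); first by rewrite -!mulrA ktn mulr1 ?mulrA.
rewrite hc.
transitivity (kt ^+ (a + b') * kti ^+ (b + b')); first by rewrite !exprD !mulrA.
rewrite e.
transitivity (kt ^+ a' * (kt ^+ b * kti ^+ b) * kti ^+ b'); first by rewrite !exprD !mulrA.
by rewrite ktn mulr1.
Qed.

Lemma sc_sum (I : Type) (r : seq I) (P : pred I) (F : I -> C) :
  sc (\sum_(i <- r | P i) F i) = \sum_(i <- r | P i) sc (F i).
Proof. apply: (big_morph sc); [exact: scD | exact: sc0]. Qed.

Lemma scN c : sc (- c) = - sc c.
Proof. apply/eqP; rewrite -subr_eq0 opprK -scD addNr; exact/eqP/sc0. Qed.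

Lemma group0 (D : seq X) :
  (forall k, \sum_(x <- D | keyx x == k) x.2 = 0) -> \sum_(x <- D) mon x = 0.
Proof.
move: {2}(size D) (leqnn (size D)) => n; elim: n D => [|n IH] D.
  by case: D => [|? ?] // _ _; rewrite big_nil.
case: D => [|x0 D] hs hk; first by rewrite big_nil.
rewrite (bigID (fun x => keyx x == keyx x0)) /=.
have -> : \sum_(x <- x0 :: D | keyx x == keyx x0) mon x = 0.
  transitivity (\sum_(x <- x0 :: D | keyx x == keyx x0) sc x.2 * Wx x0).
    by apply: eq_bigr => x /eqP hx; rewrite /mon -(W_key x x0 hx).
  by rewrite -mulr_suml -sc_sum hk sc0 mul0r.
rewrite add0r -big_filter; apply: IH.
  rewrite /= eqxx /= size_filter; apply: leq_trans (count_size _ _) _.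
  by move: hs; rewrite /= ltnS.
move=> k; rewrite big_filter_cond.
case: (eqVneq k (keyx x0)) => [->|nk].
  by rewrite big1 // => x /andP [/negP].
rewrite -[RHS](hk k); apply: eq_bigl => x.
by case: (eqVneq (keyx x) k) => [->|_]; rewrite ?andbT ?andbF // nk.
Qed.

Lemma faithful s s' : ck_syn q s -> ck_syn q s' ->
  act s (E3 z0 z0 z0 d0) = act s' (E3 z0 z0 z0 d0) -> ueq q s s'.
Proof.
move=> /ck_nf [L [hL hL']] /ck_nf [L' [hL2 hL2']] e.
rewrite hL' hL2' in e.
have ef : forall a b, nfg L d0 a b = nfg L' d0 a b.
  move=> a b; have := congr1 (fun f => f z0 z0 z0 a b) e; by rewrite /E3 /= ?eqxx.
set D := L ++ [seq (x.1, - x.2) | x <- L'].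
have hsum : cls s - cls s' = \sum_(x <- D) mon x.
  rewrite hL hL2 big_cat big_map /=; congr (_ + _); rewrite -sumrN; apply: eq_bigr => x _.
  by rewrite /mon /= scN mulNr.
have h0 : \sum_(x <- D) mon x = 0.
  apply: group0 => -[a b].
  have := ef a b; rewrite /nfg => h.
  transitivity (\sum_(x <- D) x.2 * d0 (a - dsh x) (b - (x.1.2)%:Z)).
    rewrite big_mkcond; apply: eq_bigr => x _; rewrite /d0 /keyx.
    rewrite !subr_eq0 xpair_eqE (eq_sym a) (eq_sym b); case: ifP => _; by rewrite ?mulr1 ?mulr0.
  rewrite big_cat big_map /= h -big_split /=; apply: big1 => x _.
  by rewrite /dsh /= mulNr subrr.
apply: (cls_ueq R q); apply/eqP; rewrite -subr_eq0 hsum h0 //.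
Qed.
End E.

End E.
Import E.

Module F.

Section F.
Variable R : realType.
Local Notation C := (R[i]).
Variables (q alpha : C).
Hypothesis hq0 : q != 0.
Hypothesis hq2 : q ^+ 2 != 1.
Hypothesis hal : alpha != 0.
Local Notation act := (act R q alpha).
Local Notation E3 := (E3 R).
Local Notation V := (V R).
Local Notation scV := (scV R).
Local Notation shA := (shA R).
Local Notation shAi := (shAi R).
Local Notation shB := (shB R).
Local Notation d0 := (d0 R).
Notation z0 := (Posz 0).
Notation p1 := (Posz 1). Notation p2 := (Posz 2). Notation m1 := (Negz 0).
Notation m2 := (Negz 1). Notation m3 := (Negz 2).

Definition v0 : V := E3 z0 z0 z0 d0.
Definition zV : V := fun _ _ _ _ _ => 0.
Definition col (F : V) (j k l : int) : int -> int -> C := fun a b => F j k l a b.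

Lemma actU x y : ueq q x y -> forall f, act x f = act y f.
Proof. exact: act_ueq. Qed.
Arguments actU {x y}.

Lemma act_pemb p g : act (pemb p) (E3 z0 z0 z0 g) = scV (Defs.eta alpha p) (E3 z0 z0 z0 g).
Proof.
elim: p => [| |c|x IHx y IHy|x IHx y IHy] /=.
- exact: actE1E.
- have := actE2E R q alpha hq0 hq2 hal g; rewrite /= => ->; apply: funext5 => *; by rewrite /A.scV mul0r.
- by [].
- by rewrite IHx IHy; apply: funext5 => *; rewrite /A.scV mulrDl.
- by rewrite IHy act_sc IHx; apply: funext5 => *; rewrite /A.scV mulrA [_ * Defs.eta _ x]mulrC.
Qed.

Lemma act_zV x : act x zV = zV.
Proof.
have -> : zV = scV 0 zV by apply: funext5 => *; rewrite /A.scV mul0r.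
rewrite act_sc; apply: funext5 => *; by rewrite /A.scV !mul0r.
Qed.

Lemma Mrel_act x : Mrel q alpha x -> act x v0 = zV.
Proof.
elim => {x}.
- move=> t [p ->] /=; rewrite /v0 act_pemb; apply: funext5 => *; rewrite /A.scV /zV; ring.
- by apply: funext5 => * /=; rewrite /zV mul0r.
- by move=> x y _ h1 _ h2 /=; rewrite h1 h2; apply: funext5 => *; rewrite /zV addr0.
- by move=> u x _ h /=; rewrite h act_zV.
- by move=> x y e _ h; rewrite -(actU e).
Qed.

Lemma inCK_E3 t : inCK q t -> act t v0 = E3 z0 z0 z0 (col (act t v0) z0 z0 z0).
Proof.
move=> [s [hs e]]; rewrite (actU e).
have [L [_ hL]] := ck_nf R q alpha hq0 hq2 hal s hs.
rewrite /v0 hL; apply: funext5 => j k l a b; by rewrite /E3 /col /=.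
Qed.

Section Ideal.
Variable I : term R -> Prop.
Hypothesis hI : is_CK_ideal q I.

Definition Jset (g : int -> int -> C) := exists t, I t /\ act t v0 = E3 z0 z0 z0 g.

Lemma ck_inCK s : ck_syn q s -> inCK q s.
Proof. by move=> h; exists s; split => //; exact: ue_refl. Qed.

Lemma Iueq x y : ueq q x y -> I x -> I y.
Proof. case: hI => h _ _ _ _; exact: h. Qed.
Lemma Ick x : I x -> inCK q x. Proof. case: hI => _ h _ _ _; exact: h. Qed.
Lemma I0 : I (tZero R). Proof. case: hI => _ _ h _ _; exact: h. Qed.
Lemma Iadd x y : I x -> I y -> I (tAdd x y). Proof. case: hI => _ _ _ h _; exact: h. Qed.
Lemma Imul r x : inCK q r -> I x -> I (tMul r x).
Proof. case: hI => _ _ _ _ h hr hx; by case: (h r x hr hx). Qed.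

Lemma Jext g1 g2 : (forall a b, g1 a b = g2 a b) -> Jset g1 -> Jset g2.
Proof. by move=> h; rewrite (funext2 R _ _ h). Qed.

Lemma J0 : Jset (fun _ _ => 0).
Proof.
exists (tZero R); split; first exact: I0.
apply: funext5 => j k l a b /=; rewrite mul0r /E3; by case: ifP.
Qed.

Lemma Jadd g1 g2 : Jset g1 -> Jset g2 -> Jset (fun a b => g1 a b + g2 a b).
Proof.
move=> [t1 [h1 e1]] [t2 [h2 e2]]; exists (tAdd t1 t2); split; first exact: Iadd.
rewrite /= e1 e2; apply: funext5 => j k l a b; rewrite /E3; case: ifP => _ //; by rewrite addr0.
Qed.

Lemma Jsc c g : Jset g -> Jset (fun a b => c * g a b).
Proof.
move=> [t [h e]]; exists (tMul (tC c) t); split.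
  by apply: Imul => //; apply: ck_inCK; exact: cks_C.
transitivity (act (tC c) (act t v0)); first by []. by rewrite e (actCE R q alpha).
Qed.

Lemma Jopp g : Jset g -> Jset (fun a b => - g a b).
Proof. move=> h; have := Jsc (-1) _ h; apply: Jext => a b; by rewrite mulN1r. Qed.

Lemma JshA g : Jset g -> Jset (fun a b => g (off a m1) b).
Proof.
move=> [t [h e]]; exists (tMul (Kt R) t); split.
  by apply: Imul => //; apply: ck_inCK; exact: cks_K.
transitivity (act (Kt R) (act t v0)); first by []. by rewrite e (actKtE R q alpha hq0).
Qed.
Lemma JshAi g : Jset g -> Jset (fun a b => g (off a p1) b).
Proof.
move=> [t [h e]]; exists (tMul (Kti R) t); split.
  by apply: Imul => //; apply: ck_inCK; exact: cks_Ki.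
transitivity (act (Kti R) (act t v0)); first by []. by rewrite e (actKtiE R q alpha hq0).
Qed.
Lemma JshB g : Jset g -> Jset (fun a b => g a (off b m1)).
Proof.
move=> [t [h e]]; exists (tMul (C1t q) t); split.
  by apply: Imul => //; apply: ck_inCK; exact: cks_C1.
transitivity (act (C1t q) (act t v0)); first by []. by rewrite e (actC1E R q alpha hq0 hq2 hal).
Qed.

Definition good (F : V) := forall j k l, Jset (col F j k l).

Ltac jdec := repeat first
  [ apply: Jadd | apply: Jopp | apply: Jsc | apply: JshA | apply: JshAi | apply: JshB ].

Lemma good_act u F : good F -> good (act u F).
Proof.
elim: u F => [gg|c|x IHx y IHy|x IHx y IHy] F hF j k l /=.
- case: gg; rewrite /col /=;
  unfold opE1, opE2, opF1, opF2, opK1, opK1i, opK2, opK2i; jdec; apply: hF.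
- rewrite /col; apply: Jsc; exact: hF.
- rewrite /col; apply: Jadd; [exact: IHx | exact: IHy].
- exact: (IHx (act y F) (IHy F hF) j k l).
Qed.

Lemma col_E3 g j k l : col (E3 z0 z0 z0 g) j k l =
  if (j == z0) && (k == z0) && (l == z0) then g else (fun _ _ => 0).
Proof. by rewrite /col /E3; case: ifP. Qed.

Lemma li_good y : left_ideal q I y -> good (act y v0).
Proof.
elim=> {y}.
- move=> t ht j k l.
  have e := inCK_E3 t (Ick t ht).
  set g := col (act t v0) z0 z0 z0 in e.
  rewrite e col_E3; case: ifP => _; last exact: J0.
  by exists t.
- move=> j k l; apply: (Jext (fun _ _ => 0)); last exact: J0.
  by move=> a b; rewrite /col /= mul0r.
- move=> x y _ h1 _ h2 j k l; exact: (Jadd _ _ (h1 j k l) (h2 j k l)).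
- move=> u x _ h; exact: (good_act u (act x v0) h).
- by move=> x y e _ h; rewrite -(actU e).
Qed.
End Ideal.

Lemma tpowF2 j k l g : act (tpow (F2 R) j) (E3 z0 k l g) = E3 (Posz j) k l g.
Proof.
elim: j => [|j IH].
  by apply: funext5 => * /=; rewrite mul1r.
transitivity (act (F2 R) (act (tpow (F2 R) j) (E3 z0 k l g))); first by [].
rewrite IH (actF2E R q alpha).
by rewrite /off -PoszD addn1.
Qed.

Lemma tpowF3 k l g : act (tpow (F3 q) k) (E3 z0 z0 l g) = E3 z0 (Posz k) l g.
Proof.
elim: k => [|k IH].
  by apply: funext5 => * /=; rewrite mul1r.
transitivity (act (F3 q) (act (tpow (F3 q) k) (E3 z0 z0 l g))); first by [].
rewrite IH (actF3E R q alpha hq0 hq2 hal).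
by rewrite /off -PoszD addn1.
Qed.

Lemma tpowK2 n g : act (tpow (K2 R) n) (E3 z0 z0 z0 g) = E3 z0 z0 (Posz n) g.
Proof.
elim: n => [|n IH].
  by apply: funext5 => * /=; rewrite mul1r.
transitivity (act (K2 R) (act (tpow (K2 R) n) (E3 z0 z0 z0 g))); first by [].
rewrite IH (actK2E R q alpha hq0).
by rewrite /off -PoszD addn1.
Qed.

Lemma tpowK2i n g : act (tpow (K2i R) n) (E3 z0 z0 z0 g) = E3 z0 z0 (- (Posz n)) g.
Proof.
elim: n => [|n IH].
  by apply: funext5 => * /=; rewrite mul1r.
transitivity (act (K2i R) (act (tpow (K2i R) n) (E3 z0 z0 z0 g))); first by [].
rewrite IH (actK2iE R q alpha).
congr (E3 _ _ _ _); rewrite /off; lia.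
Qed.

Lemma K2powE l g : act (K2pow R l) (E3 z0 z0 z0 g) = E3 z0 z0 l g.
Proof.
case: l => n; first exact: tpowK2.
transitivity (act (tpow (K2i R) n.+1) (E3 z0 z0 z0 g)); first by [].
by rewrite tpowK2i NegzE.
Qed.
End F.

End F.
Import F.


Lemma big_pred1_uniq (R : realType) (T : eqType) (S : seq T) (x : T) (F : T -> R[i]) :
  uniq S -> x \in S -> \sum_(p <- S | p == x) F p = F x.
Proof.
elim: S => [|p S IH] //= /andP [hp hu]; rewrite in_cons big_cons.
case: (eqVneq p x) => [<-|nx] /=.
  move=> _; rewrite big1_seq ?addr0 // => y /andP [/eqP -> hy]; by rewrite hy in hp.
move=> hx; exact: (IH hu hx).
Qed.

Section G.
Variable R : realType.
Local Notation C := (R[i]).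
Variables (q alpha : C).
Hypothesis hq0 : q != 0.
Hypothesis hq2 : q ^+ 2 != 1.
Hypothesis hal : alpha != 0.
Local Notation act := (act R q alpha).
Local Notation E3 := (E3 R).
Local Notation v0 := (v0 R).
Notation z0 := (Posz 0).
Variable Q : nat -> nat -> int -> term R.
Hypothesis hQ : forall j k l, inCK q (Q j k l).

Definition fw (p : nat * nat * int) :=
  tMul (tMul (tMul (tpow (F2 R) p.1.1) (tpow (F3 q) p.1.2)) (K2pow R p.2)) (Q p.1.1 p.1.2 p.2).
Definition gQ (p : nat * nat * int) := F.col R (act (Q p.1.1 p.1.2 p.2) v0) z0 z0 z0.

Lemma act_fw p : act (fw p) v0 = E3 (Posz p.1.1) (Posz p.1.2) p.2 (gQ p).
Proof.
transitivity (act (tpow (F2 R) p.1.1) (act (tpow (F3 q) p.1.2) (act (K2pow R p.2)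
   (act (Q p.1.1 p.1.2 p.2) v0)))); first by [].
rewrite (inCK_E3 R q alpha hq0 hq2 hal _ (hQ _ _ _)) (K2powE R q alpha hq0) //.
by rewrite (tpowF3 R q alpha hq0 hq2 hal) (tpowF2 R q alpha) //.
Qed.

Lemma act_tsum_pt S j k l a b :
  act (tsum S fw) v0 (Posz j) (Posz k) l a b = \sum_(p <- S | p == (j, k, l)) gQ p a b.
Proof.
elim: S => [|p S IH].
  by rewrite big_nil /= mul0r.
rewrite big_cons -IH.
transitivity (act (fw p) v0 (Posz j) (Posz k) l a b + act (tsum S fw) v0 (Posz j) (Posz k) l a b);
  first by [].
rewrite act_fw /E3; case: p => [[pj pk] pl] /=.
rewrite !eqz_nat !xpair_eqE (eq_sym j) (eq_sym k) (eq_sym l).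
by case: ifP => _ //; rewrite add0r.
Qed.
End G.

Theorem lemma3p3 (R : realType) (q alpha : R[i])
  (hq0 : q != 0) (hq : forall n : nat, (0 < n)%N -> q ^+ n != 1)
  (halpha : alpha != 0)
  (I : term R -> Prop) (hI : is_CK_ideal q I)
  (Q : nat -> nat -> int -> term R)
  (hQ : forall j k l, inCK q (Q j k l))
  (S : seq (nat * nat * int)) (hS : uniq S)
  (hsupp : forall j k l, (j, k, l) \notin S -> ueq q (Q j k l) (tZero R)) :
  inW q alpha I
    (tsum S (fun p => tMul (tMul (tMul (tpow (F2 R) p.1.1) (tpow (F3 q) p.1.2))
                                 (K2pow R p.2)) (Q p.1.1 p.1.2 p.2)))
  <-> (forall j k l, I (Q j k l)).
Proof.
have hq2 : q ^+ 2 != 1 by apply: hq.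
set w := tsum S _.
have ew : w = tsum S (fw R q Q) by [].
split.
- move=> [y [hy hM]] j k l.
  have hz := Mrel_act R q alpha hq0 hq2 halpha _ hM.
  have ewy : forall jj kk ll a b, act R q alpha w (v0 R) jj kk ll a b = act R q alpha y (v0 R) jj kk ll a b.
    move=> jj kk ll a b; have := congr1 (fun f => f jj kk ll a b) hz; rewrite /= /zV => h.
    by apply/eqP; rewrite -subr_eq0 -mulN1r h.
  case: (boolP ((j, k, l) \in S)) => hin; last first.
    exact: (Iueq R q I hI (tZero R) _ (ue_sym (hsupp _ _ _ hin)) (I0 R q I hI)).
  have gy := li_good R q alpha hq0 hq2 halpha I hI y hy (Posz j) (Posz k) l.
  have ecol : F.col R (act R q alpha y (v0 R)) (Posz j) (Posz k) l = gQ R q alpha Q (j, k, l).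
    apply: funext2 => a b; rewrite /F.col -ewy ew (act_tsum_pt R q alpha hq0 hq2 halpha Q hQ).
    exact: big_pred1_uniq.
  rewrite ecol in gy; case: gy => t [ht et].
  have eQ := inCK_E3 R q alpha hq0 hq2 halpha (Q j k l) (hQ j k l).
  have [s [hs es]] := Ick R q I hI t ht.
  have [s' [hs' es']] := hQ j k l.
  have ess : ueq q s s'.
    apply: (faithful R q alpha hq0 hq2 halpha) => //.
    rewrite -(actU R q alpha hq0 hq2 halpha _ _ es) -(actU R q alpha hq0 hq2 halpha _ _ es').
    by rewrite et eQ.
  apply: (Iueq R q I hI t) ht.
  exact: ue_trans es (ue_trans ess (ue_sym es')).
- move=> hall; exists w; split.
  + rewrite /w /tsum; elim: {hS hsupp w ew} S => [|p S IH] /=; first exact: li_zero.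
    apply: li_add => //; apply: li_lmul; apply: li_gen; exact: hall.
  + apply: (li_ueq (x := tZero R)); [apply: ue_sym; exact: ue_addN | exact: li_zero].
Qed.
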